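(* Let $A=A_s+A_d\epsilon\in\mathbb{DC}^{m\times n}$. Then the DMPGI of $A$ exists if and only if all nonzero singular values of $A$ are appreciable (i.e. $A$ has no positive infinitesimal singular values). Furthermore, in that case, if $A=U\Sigma V^*$ is an SVD of $A$ with $\Sigma=\mathrm{diag}(\Sigma_r,O_{m-r,n-r})$, $\Sigma_r=\mathrm{diag}(\mu_1,\dots,\mu_r)$ with $\mu_1,\dots,\mu_r$ appreciable, then $$A^D=V\begin{bmatrix}\Sigma_r^{-1}&O\\O&O\end{bmatrix}U^*.$$
   Context: A dual number is $a=a_s+a_d\epsilon$ where $\epsilon\neq0$, $\epsilon^2=0$, and $\epsilon$ commutes with real/complex numbers; it is appreciable if $a_s\neq0$ and infinitesimal otherwise. For appreciable $\mu$, $\mu^{-1}=\mu_s^{-1}-\mu_s^{-2}\mu_d\epsilon$. For a dual complex matrix $A=A_s+A_d\epsilon$, $A^*=A_s^*+A_d^*\epsilon$; unitary means $U^*U=UU^*=I$. Every $A\in\mathbb{DC}^{m\times n}$ has an SVD $A=U\Sigma V^*$ with $U\in\mathbb{DC}^{m\times m},V\in\mathbb{DC}^{n\times n}$ unitary and $\Sigma\in\mathbb{D}^{m\times n}$ diagonal with diagonal entries $\mu_1\ge\dots\ge\mu_r$ positive appreciable dual reals, $\mu_{r+1}\ge\dots\ge\mu_t$ positive infinitesimal dual reals, and zeros, $r\le t\le\min\{m,n\}$; these singular values are unique (order on dual reals: $a>b$ iff $a_s>b_s$, or $a_s=b_s$ and $a_d>b_d$). The dual Moore–Penrose generalized inverse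 (DMPGI) of $A$, denoted $A^D$, is a matrix $X\in\mathbb{DC}^{n\times m}$ satisfying $AXA=A$, $XAX=X$, $(AX)^*=AX$, $(XA)^*=XA$. *)

(* Defs.v *)
From HB Require Import structures.
From mathcomp Require Import all_boot all_order all_algebra.
From mathcomp Require Import reals.
From mathcomp Require Import complex.
Set Implicit Arguments. Unset Strict Implicit. Unset Printing Implicit Defensive.
Import Order.TTheory GRing.Theory Num.Theory.
Local Open Scope ring_scope.

Section DualComplex.
Variable R : realType.
Local Notation C := (R[i]).

(* A dual complex number a = a_s + a_d eps is the pair (a_s, a_d). *)
Definition dual := (C * C)%type.

(* A dual complex matrix A = A_s + A_d eps is the pair (A_s, A_d). *)
Definition dmat (m n : nat) := ('M[C]_(m, n) * 'M[C]_(m, n))%type.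

Definition dentry m n (A : dmat m n) (i : 'I_m) (j : 'I_n) : dual :=
  (A.1 i j, A.2 i j).

Definition dmulmx m n p (A : dmat m n) (B : dmat n p) : dmat m p :=
  (A.1 *m B.1, A.1 *m B.2 + A.2 *m B.1).

Definition cadj m n (M : 'M[C]_(m, n)) : 'M[C]_(n, m) := (map_mx Num.conj M)^T.
Definition dadj m n (A : dmat m n) : dmat n m := (cadj A.1, cadj A.2).

Definition dI n : dmat n n := (1%:M, 0).

Definition dunitary n (U : dmat n n) : Prop :=
  dmulmx (dadj U) U = dI n /\ dmulmx U (dadj U) = dI n.

Definition dreal (a : dual) : bool := (a.1 \is Num.real) && (a.2 \is Num.real).

Definition dle (a b : dual) : bool := (a.1 < b.1) || ((a.1 == b.1) && (a.2 <= b.2)).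

Definition appreciable (a : dual) : bool := a.1 != 0.
Definition dzero : dual := (0, 0).

Definition dinv (a : dual) : dual := (a.1^-1, - (a.1 ^- 2) * a.2).

(* Sigma is an m x n dual real diagonal matrix whose diagonal entries are
   nonnegative and nonincreasing (for the dual order); this is exactly the
   shape mu_1 >= .. >= mu_r > 0 appreciable, mu_(r+1) >= .. >= mu_t > 0
   infinitesimal, followed by zeros. *)
Definition svd_diag m n (S : dmat m n) : Prop :=
  [/\ forall (i : 'I_m) (j : 'I_n), dreal (dentry S i j),
      forall (i : 'I_m) (j : 'I_n), (i : nat) <> j -> dentry S i j = dzero,
      forall (i : 'I_m) (j : 'I_n), (i : nat) = j -> dle dzero (dentry S i j) &
      forall (i i' : 'I_m) (j j' : 'I_n), (i : nat) = j -> (i' : nat) = j' ->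
        (i <= i')%N -> dle (dentry S i' j') (dentry S i j)].

Definition is_dSVD m n (A : dmat m n) (U : dmat m m) (S : dmat m n) (V : dmat n n)
  : Prop :=
  [/\ dunitary U, dunitary V, svd_diag S & A = dmulmx (dmulmx U S) (dadj V)].

Definition is_DMPGI m n (A : dmat m n) (X : dmat n m) : Prop :=
  [/\ dmulmx (dmulmx A X) A = A,
      dmulmx (dmulmx X A) X = X,
      dadj (dmulmx A X) = dmulmx A X &
      dadj (dmulmx X A) = dmulmx X A].

(* diag(Sigma_r^{-1}, O) : the n x m matrix whose (j,i) diagonal entry is the
   inverse of the (i,j) diagonal entry of Sigma when that entry is appreciable,
   and 0 otherwise. *)
Definition svd_pinv_diag m n (S : dmat m n) : dmat n m :=
  (\matrix_(j < n, i < m)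
     (if ((i : nat) == j) && appreciable (dentry S i j) then (dinv (dentry S i j)).1
      else 0),
   \matrix_(j < n, i < m)
     (if ((i : nat) == j) && appreciable (dentry S i j) then (dinv (dentry S i j)).2
      else 0)).

End DualComplex.

(* Main.v *)
Require Import Defs.
From HB Require Import structures.
From mathcomp Require Import all_boot all_order all_algebra.
From mathcomp Require Import reals.
From mathcomp Require Import complex.
From mathcomp Require Import ring.
Set Implicit Arguments. Unset Strict Implicit. Unset Printing Implicit Defensive.
Import Order.TTheory GRing.Theory Num.Theory.
Local Open Scope ring_scope.

Section Alg.
Variable R : realType.
Local Notation C := (R[i]).

Lemma dmulmxA m n p q (A : dmat R m n) (B : dmat R n p) (D : dmat R p q) :
  dmulmx A (dmulmx B D) = dmulmx (dmulmx A B) D.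
Proof.
case: A => A1 A2; case: B => B1 B2; case: D => D1 D2; rewrite /dmulmx /=.
by rewrite !mulmxA !mulmxDr !mulmxDl !mulmxA addrA.
Qed.

Lemma dmul1mx m n (A : dmat R m n) : dmulmx (dI R m) A = A.
Proof. by case: A => A1 A2; rewrite /dmulmx /dI /= !mul1mx mul0mx addr0. Qed.

Lemma dmulmx1 m n (A : dmat R m n) : dmulmx A (dI R n) = A.
Proof. by case: A => A1 A2; rewrite /dmulmx /dI /= !mulmx1 mulmx0 add0r. Qed.

Lemma cadjM m n p (A : 'M[C]_(m, n)) (B : 'M[C]_(n, p)) :
  cadj (A *m B) = cadj B *m cadj A.
Proof. by rewrite /cadj (map_mxM Num.conj) trmx_mul. Qed.

Lemma cadjD m n (A B : 'M[C]_(m, n)) : cadj (A + B) = cadj A + cadj B.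
Proof. by rewrite /cadj (map_mxD Num.conj) linearD. Qed.

Lemma cadjK m n (A : 'M[C]_(m, n)) : cadj (cadj A) = A.
Proof. by apply/matrixP => i j; rewrite /cadj !mxE conjCK. Qed.

Lemma cadj0 m n : cadj (0 : 'M[C]_(m, n)) = 0.
Proof. by apply/matrixP => i j; rewrite /cadj !mxE rmorph0. Qed.

Lemma dadjM m n p (A : dmat R m n) (B : dmat R n p) :
  dadj (dmulmx A B) = dmulmx (dadj B) (dadj A).
Proof.
case: A => A1 A2; case: B => B1 B2; rewrite /dmulmx /dadj /=.
by rewrite !cadjM cadjD !cadjM addrC.
Qed.

Lemma dadjK m n (A : dmat R m n) : dadj (dadj A) = A.
Proof. by case: A => A1 A2; rewrite /dadj /= !cadjK. Qed.

Lemma dunitK1 n p (V : dmat R n n) (M : dmat R p n) : dunitary V ->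
  dmulmx (dmulmx M (dadj V)) V = M.
Proof. by case=> h1 h2; rewrite -dmulmxA h1 dmulmx1. Qed.

Lemma dunitK2 n p (V : dmat R n n) (M : dmat R p n) : dunitary V ->
  dmulmx (dmulmx M V) (dadj V) = M.
Proof. by case=> h1 h2; rewrite -dmulmxA h2 dmulmx1. Qed.

Lemma dmpgi_uniq m n (A : dmat R m n) X Y : is_DMPGI A X -> is_DMPGI A Y -> X = Y.
Proof.
case=> [x1 x2 x3 x4] [y1 y2 y3 y4].
have eA1 : dadj A = dmulmx (dadj A) (dmulmx A Y).
  by rewrite -y3 -dadjM y1.
have eA2 : dadj A = dmulmx (dmulmx X A) (dadj A).
  by rewrite -x4 -dadjM dmulmxA x1.
have hX : X = dmulmx (dmulmx X A) Y.
  transitivity (dmulmx X (dadj (dmulmx A X))); first by rewrite x3 dmulmxA x2.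
  rewrite dadjM eA1 (dmulmxA (dadj X)) -dadjM x3.
  by rewrite !dmulmxA x2.
have hY : Y = dmulmx (dmulmx X A) Y.
  transitivity (dmulmx (dadj (dmulmx Y A)) Y); first by rewrite y4 y2.
  rewrite dadjM eA2 -(dmulmxA (dmulmx X A) (dadj A)) -dadjM y4.
  by rewrite -dmulmxA y2.
by rewrite hX -hY.
Qed.
End Alg.

Section Diag.
Variable R : realType.
Local Notation C := (R[i]).

Definition ddiag p q (D : dmat R p q) : Prop :=
  forall (i : 'I_p) (j : 'I_q), (i : nat) <> j -> D.1 i j = 0 /\ D.2 i j = 0.

Definition dsupp p q (D : dmat R p q) : 'M[C]_p :=
  \matrix_(i, i') (if (i == i') && [exists j : 'I_q, (val j == val i) && (D.1 i j != 0)]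
                   then 1 else 0).

Definition drel p q (D : dmat R p q) (D' : dmat R q p) : Prop :=
  forall (i : 'I_p) (j : 'I_q), (i : nat) = j ->
   (D.1 i j = 0 /\ D.2 i j = 0 /\ D'.1 j i = 0 /\ D'.2 j i = 0) \/
   (D.1 i j * D'.1 j i = 1 /\ D.1 i j * D'.2 j i + D.2 i j * D'.1 j i = 0).

Lemma drel_sym p q (D : dmat R p q) D' : drel D D' -> drel D' D.
Proof.
move=> h j i eji; case: (h i j (esym eji)) => [[a [b [c d]]]|[a b]].
  by left.
by right; rewrite mulrC a; split => //; rewrite addrC mulrC [X in _ + X]mulrC.
Qed.

Lemma drel_zero p q (D : dmat R p q) D' (i : 'I_p) (j : 'I_q) : drel D D' -> (i : nat) = j ->
  D.1 i j = 0 -> D.2 i j = 0.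
Proof.
move=> h eij z; case: (h i j eij) => [[_ [b _]]|[a _]] //.
by move: a; rewrite z mul0r => /eqP; rewrite eq_sym oner_eq0.
Qed.

Lemma ex_j0 p q (D : dmat R p q) (i : 'I_p) (j0 : 'I_q) : (i : nat) = j0 ->
  [exists j : 'I_q, (val j == val i) && (D.1 i j != 0)] = (D.1 i j0 != 0).
Proof.
move=> e; apply/existsP/idP.
  case=> j /andP[/eqP hj nz]; have -> : j0 = j by apply: val_inj => /=; rewrite hj; exact: (esym e).
  exact: nz.
by move=> nz; exists j0; rewrite nz andbT; apply/eqP.
Qed.

Lemma ex_none p q (D : dmat R p q) (i : 'I_p) : (q <= i)%N ->
  [exists j : 'I_q, (val j == val i) && (D.1 i j != 0)] = false.
Proof.
move=> le; apply/existsP => -[j /andP[/eqP hj _]].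
by move: (ltn_ord j); rewrite hj ltnNge le.
Qed.

Lemma dsupp_mul p q (D : dmat R p q) : ddiag D ->
  (forall (i : 'I_p) (j : 'I_q), (i : nat) = j -> D.1 i j = 0 -> D.2 i j = 0) ->
  dmulmx (dsupp D, 0) D = D.
Proof.
move=> hd hz; case: D hd hz => D1 D2 hd hz; rewrite /dmulmx /=.
rewrite mul0mx addr0.
have key : forall M : 'M[C]_(p, q), (forall (i : 'I_p) (j : 'I_q), M i j != 0 -> D1 i j != 0 /\ (i : nat) = j) ->
   dsupp (D1, D2) *m M = M.
  move=> M hM; apply/matrixP => i j; rewrite !mxE (bigD1 i) //= big1 ?addr0.
    rewrite !mxE eqxx /=.
    case: (ltnP i q) => hi.
      rewrite (ex_j0 (D1, D2) (i := i) (j0 := Ordinal hi)) //=.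
      case: eqP => z; last by rewrite mul1r.
      rewrite mul0r; apply/esym/eqP; apply: contraT => nz.
      case: (hM _ _ nz) => nz1 eij.
      have ej : j = Ordinal hi by apply: val_inj.
      by move: nz1; rewrite ej z eqxx.
    rewrite (ex_none (D1, D2) hi) mul0r; apply/esym/eqP; apply: contraT => nz.
    case: (hM _ _ nz) => _ eij; move: (ltn_ord j); rewrite -eij ltnNge hi //.
  by move=> k /negbTE nk; rewrite !mxE eq_sym nk mul0r.
congr (_, _); apply: key => i j nz.
  split => //; apply/eqP; apply: contraT => /eqP hij.
  by case: (hd i j hij) => z _; rewrite z eqxx in nz.
have eij : (i : nat) = j.
  apply: contraTeq nz => /eqP ne; rewrite negbK.
  by case: (hd i j ne) => _ ->.
split => //; apply/negP => /eqP z; move: nz; by rewrite (hz i j eij z) eqxx.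
Qed.

Lemma dsupp_mulP p q (D : dmat R p q) D' : ddiag D -> ddiag D' -> drel D D' ->
  dmulmx D D' = (dsupp D, 0).
Proof.
case: D D' => D1 D2 [D'1 D'2] hd hd' hr; rewrite /dmulmx /=.
congr (_, _); apply/matrixP => i i'; rewrite !mxE.
- case: (ltnP i q) => hi.
    set j0 := Ordinal hi.
    rewrite (bigD1 j0) //= big1 ?addr0; last first.
      move=> j nj; have ne : (i : nat) <> j.
        by move=> e; apply: (negP nj); apply/eqP/val_inj => /=; rewrite -e.
      by have [-> _] := hd i j ne; rewrite mul0r.
    rewrite (ex_j0 (D1, D2) (j0 := j0)) //.
    have [<-|ne] := eqVneq i i'.
      rewrite /=; case: (hr i j0 erefl) => [[a [b [c d]]] | [a b]].
        by rewrite a eqxx mul0r.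
      have nz : D1 i j0 != 0.
        by apply/eqP => z; move: a; rewrite z mul0r => /eqP; rewrite eq_sym oner_eq0.
      by rewrite a nz.
    rewrite /=.
    have ne' : (j0 : nat) <> i' by move=> e; case/eqP: ne; apply: val_inj.
    by have [-> _] := hd' j0 i' ne'; rewrite mulr0.
  rewrite big1 ?(ex_none (D1, D2) hi) ?andbF // => j _.
  have ne : (i : nat) <> j by move=> e; move: (ltn_ord j); rewrite -e ltnNge hi.
  by have [-> _] := hd i j ne; rewrite mul0r.
- rewrite -big_split /=; apply: big1 => j _.
  have [eij|nij] := eqVneq (i : nat) j; last first.
    by have [-> ->] := hd i j (elimN eqP nij); rewrite !mul0r addr0.
  have [eii'|nii'] := eqVneq (i : nat) i'; last first.
    have ne : (j : nat) <> i' by move=> e; apply: (elimN eqP nii'); rewrite eij.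
    by have [-> ->] := hd' j i' ne; rewrite !mulr0 addr0.
  have -> : i' = i by apply: val_inj.
  case: (hr i j eij) => [[a [b [c d]]] | [a b]] //=.
  by rewrite a b !mul0r addr0.
Qed.
End Diag.

Section Main.
Variable R : realType.
Local Notation C := (R[i]).

Lemma dsupp_adj p q (D : dmat R p q) : dadj (dsupp D, 0) = (dsupp D, 0).
Proof.
rewrite /dadj /= cadj0; congr (_, _); apply/matrixP => i i'; rewrite /cadj !mxE.
have [<-|ne] := eqVneq i' i; first by case: ifP => _; rewrite ?rmorph1 ?rmorph0.
by rewrite /= rmorph0.
Qed.

Lemma rowz m n p (P : 'M[C]_(m, n)) (Q : 'M[C]_(n, p)) i k :
  (forall l, P i l = 0) -> (P *m Q) i k = 0.
Proof. by move=> h; rewrite mxE big1 // => l _; rewrite h mul0r. Qed.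

Lemma colz m n p (P : 'M[C]_(m, n)) (Q : 'M[C]_(n, p)) i k :
  (forall l, Q l k = 0) -> (P *m Q) i k = 0.
Proof. by move=> h; rewrite mxE big1 // => l _; rewrite h mulr0. Qed.

Lemma svd_ddiag m n (S : dmat R m n) : svd_diag S -> ddiag S.
Proof.
case=> _ hoff _ _ i j ne; have := hoff i j ne; rewrite /dentry /dzero.
by case.
Qed.

Lemma pinv_ddiag m n (S : dmat R m n) : ddiag (svd_pinv_diag S).
Proof.
move=> j i ne; rewrite /svd_pinv_diag /= !mxE.
have -> : ((i : nat) == j) = false by apply/eqP => e; apply: ne.
by [].
Qed.

Lemma pinv_drel m n (S : dmat R m n) :
  (forall (i : 'I_m) (j : 'I_n), (i : nat) = j ->
        dentry S i j <> dzero R -> appreciable (dentry S i j)) ->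
  drel S (svd_pinv_diag S).
Proof.
move=> H i j e; rewrite /svd_pinv_diag /= !mxE /=.
have -> : ((i : nat) == j) = true by apply/eqP.
rewrite /appreciable /=.
have [z|z] := eqVneq (S.1 i j) 0.
  have : dentry S i j = dzero R.
    have [//|ne] := eqVneq (dentry S i j) (dzero R).
    by move: (H i j e (elimN eqP ne)); rewrite /appreciable /= z eqxx.
  move/(congr1 snd) => /= t0.
  by left; rewrite z t0.
right; rewrite /=; split; first by rewrite mulfV.
by field.
Qed.

End Main.

Unset Implicit Arguments.
Set Strict Implicit.

Theorem theorem5p1 (R : realType) (m n : nat) (A : dmat R m n)
    (U : dmat R m m) (S : dmat R m n) (V : dmat R n n) :
  is_dSVD A U S V ->
  ((exists X : dmat R n m, is_DMPGI A X) <->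
     (forall (i : 'I_m) (j : 'I_n), (i : nat) = j ->
        dentry S i j <> dzero R -> appreciable (dentry S i j))) /\
  ((forall (i : 'I_m) (j : 'I_n), (i : nat) = j ->
        dentry S i j <> dzero R -> appreciable (dentry S i j)) ->
   forall X : dmat R n m, is_DMPGI A X ->
     X = dmulmx (dmulmx V (svd_pinv_diag S)) (dadj U)).
Proof.
move=> [hU hV hS hA].
have hdS := svd_ddiag hS.
set P := svd_pinv_diag S.
set X0 := dmulmx (dmulmx V P) (dadj U).
have hsuff : (forall (i : 'I_m) (j : 'I_n), (i : nat) = j ->
        dentry S i j <> dzero R -> appreciable (dentry S i j)) -> is_DMPGI A X0.
  move=> H.
  have hdP : ddiag P := pinv_ddiag S.
  have hr := pinv_drel H.
  have SP : dmulmx S P = (dsupp S, 0) := dsupp_mulP hdS hdP hr.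
  have PS : dmulmx P S = (dsupp P, 0) := dsupp_mulP hdP hdS (drel_sym hr).
  have SPS : dmulmx (dsupp S, 0) S = S.
    apply: dsupp_mul hdS _ => i j e; exact: drel_zero hr e.
  have PSP : dmulmx (dsupp P, 0) P = P.
    apply: dsupp_mul hdP _ => i j e; exact: drel_zero (drel_sym hr) e.
  have hAX : dmulmx A X0 = dmulmx (dmulmx U (dsupp S, 0)) (dadj U).
    by rewrite hA /X0 !dmulmxA (dunitK1 _ hV) -(dmulmxA U S P) SP.
  have hXA : dmulmx X0 A = dmulmx (dmulmx V (dsupp P, 0)) (dadj V).
    by rewrite hA /X0 !dmulmxA (dunitK1 _ hU) -(dmulmxA V P S) PS.
  split.
  - rewrite hAX hA !dmulmxA (dunitK1 _ hU) -(dmulmxA U _ S) SPS //.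
  - rewrite hXA /X0 !dmulmxA (dunitK1 _ hV) -(dmulmxA V _ P) PSP //.
  - by rewrite hAX !dadjM dadjK dsupp_adj dmulmxA.
  - by rewrite hXA !dadjM dadjK dsupp_adj dmulmxA.
have nec : forall X, is_DMPGI A X -> (forall (i : 'I_m) (j : 'I_n), (i : nat) = j ->
        dentry S i j <> dzero R -> appreciable (dentry S i j)).
  move=> X [x1 x2 x3 x4] i j e nz.
  rewrite /appreciable /=; apply/eqP => z; apply: nz.
  have hS' : S = dmulmx (dmulmx (dadj U) A) V.
    by rewrite hA !dmulmxA (dunitK1 _ hV); case: hU => -> _; rewrite dmul1mx.
  set Y := dmulmx (dmulmx (dadj V) X) U.
  have eAXA : forall M : dmat R m m, dmulmx (dmulmx (dmulmx M A) X) A = dmulmx M A.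
    by move=> M; rewrite -!dmulmxA (dmulmxA A X A) x1.
  have hSYS : dmulmx (dmulmx S Y) S = S.
    rewrite {3}hS' -eAXA -(dunitK2 (dmulmx (dmulmx (dadj U) A) X) hU).
    rewrite -(dunitK2 (dmulmx (dadj U) A) hV).
    by rewrite hS' /Y !dmulmxA.
  have row0 : forall l : 'I_n, S.1 i l = 0.
    move=> l; have [e'|ne] := eqVneq (i : nat) l.
      by have -> : l = j by apply: val_inj; rewrite /= -e' e.
    by have [-> _] := hdS i l (elimN eqP ne).
  have col0 : forall k : 'I_m, S.1 k j = 0.
    move=> k; have [e'|ne] := eqVneq (k : nat) j.
      by have -> : k = i by apply: val_inj; rewrite /= e' e.
    by have [-> _] := hdS k j (elimN eqP ne).
  have t0 : S.2 i j = 0.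
    move: hSYS => /(congr1 snd)/(congr1 (fun M : 'M[R[i]]_(m, n) => M i j)) /=.
    rewrite mxE (colz _ _ col0) addr0 mxE big1 => [<- //|k _].
    by rewrite (rowz _ _ row0) mul0r.
  by rewrite /dentry z t0.
split.
  split; first by case=> X; apply: nec.
  by move=> H; exists X0; apply: hsuff.
move=> H X hX; apply: (dmpgi_uniq hX); exact: hsuff.
Qed.
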